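(* (a) For any alphabet and any words $x,y$, if $y\in x\,\text{ш}\,x^R$ then $y$ is an abelian square. (b) If $y\in\{0,1\}^*$ is an abelian square, then there exists a word $x\in\{0,1\}^*$ such that $y\in x\,\text{ш}\,x^R$.
   Context: $x^R$ denotes the reversal of $x$. For words $x,y$, the (ordinary) shuffle $x \,\text{ш}\, y$ is the finite set of all words $z = x_1y_1x_2y_2\cdots x_ny_n$ for some $n\ge 1$ and words $x_1,\dots,x_n,y_1,\dots,y_n$ (possibly empty) with $x=x_1\cdots x_n$ and $y=y_1\cdots y_n$. An abelian square is a word of the form $uu'$ where $u'$ is a permutation (rearrangement of the letters) of $u$. *)

(* Defs.v *)
From mathcomp Require Import all_boot.
Set Implicit Arguments. Unset Strict Implicit. Unset Printing Implicit Defensive.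

Definition interleave (T : Type) (xs ys : seq (seq T)) : seq T :=
  flatten [seq p.1 ++ p.2 | p <- zip xs ys].

(* z is in the (ordinary) shuffle x ш y: z = x1 y1 x2 y2 ... xn yn with
   n >= 1, x = x1...xn, y = y1...yn (the pieces possibly empty). *)
Definition in_shuffle (T : Type) (x y z : seq T) : Prop :=
  exists (xs ys : seq (seq T)),
    [/\ size xs = size ys, 0 < size xs, flatten xs = x, flatten ys = y
      & z = interleave xs ys].

Definition abelian_square (T : eqType) (y : seq T) : Prop :=
  exists u u' : seq T, y = u ++ u' /\ perm_eq u u'.

(* Main.v *)
Require Import Defs.
From mathcomp Require Import all_boot.
From mathcomp Require Import zify.

Lemma interleave_cons (T : Type) (a b : seq T) xs ys :
  interleave (a :: xs) (b :: ys) = a ++ b ++ interleave xs ys.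
Proof. by rewrite /interleave /= catA. Qed.

Lemma perm_inter (T : eqType) (xs ys : seq (seq T)) :
  size xs = size ys -> perm_eq (interleave xs ys) (flatten xs ++ flatten ys).
Proof.
elim: xs ys => [|a xs IH] [|b ys] //= [] Hs.
rewrite interleave_cons -catA perm_cat2l perm_sym perm_catCA perm_cat2l perm_sym.
exact: IH.
Qed.

Lemma take_addcat (T : Type) (a s : seq T) i :
  take (size a + i) (a ++ s) = a ++ take i s.
Proof. by rewrite take_cat ltnNge leq_addr /= addKn. Qed.

Lemma take_inter (T : eqType) (xs ys : seq (seq T)) k :
  exists i j, perm_eq (take k (interleave xs ys))
                      (take i (flatten xs) ++ take j (flatten ys)).
Proof.
elim: xs ys k => [|a xs IH] [|b ys] k.
- by exists 0, 0; rewrite /interleave /= ?take0.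
- by exists 0, 0; rewrite /interleave /= ?take0.
- by exists 0, 0; rewrite /interleave /= ?take0.
rewrite interleave_cons /=.
rewrite take_cat; case: ifP => H1.
  exists k, 0; by rewrite take0 cats0 take_cat H1.
rewrite take_cat; case: ifP => H2.
  exists (size a), (k - size a).
  by rewrite take_cat ltnn subnn take0 cats0 take_cat H2.
have [i [j Hp]] := IH ys (k - size a - size b).
exists (size a + i), (size b + j).
rewrite !take_addcat -catA perm_cat2l perm_sym perm_catCA perm_cat2l perm_sym.
exact: Hp.
Qed.

Definition fU (c : bool) : seq bool * seq bool :=
  if c then ([::], [:: c]) else ([:: c], [::]).
Definition fV (c : bool) : seq bool * seq bool :=
  if c then ([:: c], [::]) else ([::], [:: c]).

Lemma flat_inter (P : seq (seq bool * seq bool)) :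
  interleave (unzip1 P) (unzip2 P) = flatten [seq p.1 ++ p.2 | p <- P].
Proof. by rewrite /interleave zip_unzip. Qed.

Theorem mainTheorem4 :
  (forall (T : eqType) (x y : seq T),
      in_shuffle x (rev x) y -> abelian_square y) /\
  (forall y : seq bool,
      abelian_square y -> exists x : seq bool, in_shuffle x (rev x) y).
Proof.
split.
- move=> T x y [xs [ys [Hs _ Hx Hy Hz]]].
  set n := size x.
  have Hperm : perm_eq y (x ++ rev x) by rewrite Hz -Hy -Hx; exact: perm_inter.
  have [i [j Hp]] := @take_inter T xs ys n.
  rewrite -Hz Hx Hy take_rev in Hp.
  have Hsy : size y = n + n by rewrite (perm_size Hperm) size_cat size_rev.
  have Hsz := perm_size Hp.
  rewrite size_take Hsy size_cat size_take size_rev size_drop in Hsz.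
  have H1 : perm_eq (take n y) x.
    apply: (perm_trans Hp).
    apply: (@perm_trans _ (take i x ++ drop (n - j) x)).
      by rewrite perm_cat2l perm_rev.
    case: (ltnP i n) => Hi.
      rewrite Hi in Hsz.
      have -> : n - j = i.
        move: Hsz; case: ifP => Hc //; move: Hc Hi; rewrite /n; lia.
      by rewrite cat_take_drop.
    have Hi2 : (i < size x) = false by rewrite ltnNge Hi.
    rewrite Hi2 in Hsz.
    rewrite take_oversize //.
    have -> : drop (n - j) x = [::].
      apply/eqP; rewrite -size_eq0 size_drop; move: Hsz; case: ifP => Hc //; move: Hc; rewrite /n; lia.
    by rewrite cats0.
  exists (take n y), (drop n y); split; first by rewrite cat_take_drop.
  have H2 : perm_eq (x ++ drop n y) (x ++ x).
    apply: (@perm_trans _ (take n y ++ drop n y)).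
      by rewrite perm_cat2r perm_sym.
    rewrite cat_take_drop; apply: (perm_trans Hperm).
    by rewrite perm_cat2l perm_rev.
  rewrite perm_cat2l in H2.
  apply: (perm_trans H1); by rewrite perm_sym.
- move=> y [u [v [-> Huv]]].
  set a := count negb u; set b := count id u.
  exists (nseq a false ++ nseq b true).
  set P := map fU u ++ map fV v ++ [:: ([::], [::])].
  exists (unzip1 P), (unzip2 P); split.
  + by rewrite /unzip1 /unzip2 !size_map.
  + rewrite size_map /P !size_cat /=; lia.
  + rewrite /P /unzip1 !map_cat !flatten_cat /= cats0.
    congr (_ ++ _).
      rewrite /a; elim: u {Huv a b P} => [|[] u IH] //=; by rewrite IH.
    rewrite /b; have -> : count id u = count id v by move/permP: Huv.
    elim: v {Huv a b P} => [|[] v IH] //=; by rewrite IH.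
  + rewrite rev_cat !rev_nseq.
    rewrite /P /unzip2 !map_cat !flatten_cat /= cats0.
    congr (_ ++ _).
      rewrite /b; elim: u {Huv a b P} => [|[] u IH] //=; by rewrite IH.
    rewrite /a; have -> : count negb u = count negb v by move/permP: Huv.
    elim: v {Huv a b P} => [|[] v IH] //=; by rewrite IH.
  + rewrite flat_inter /P !map_cat !flatten_cat /= cats0.
    congr (_ ++ _).
      by elim: u {Huv a b P} => [|[] u IH] //=; rewrite -IH.
    by elim: v {Huv a b P} => [|[] v IH] //=; rewrite -IH.
Qed.
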